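(* Let $f(r)=r$, let $q_0\in\mathbb R^3\setminus\Sigma$, and let $\gamma$ be an arc-length parametrized normal trajectory from $q_0$ with initial covector $\lambda_0=(u_0,v_0,w_0)\in E_1$. Then $$t_{\mathrm{con}}(\gamma)=\frac{\pi}{|w_0|},$$ with the convention $t_{\mathrm{con}}(\gamma)=+\infty$ when $w_0=0$ (the straight-line geodesics).
   Context: Consider $\mathbb R^3$ with points $q=(x,y,z)$, $r=\sqrt{x^2+y^2}$, $\Sigma=\{r=0\}$, and $f(r)=r$. Let $q_0=(x_0,y_0,z_0)$ and $r_0=\sqrt{x_0^2+y_0^2}$. Normal trajectories are projections of solutions of $$\dot x=u,\quad \dot y=v,\quad \dot z=r^2w,\quad \dot u=-w^2x,\quad \dot v=-w^2y,\quad \dot w=0,$$ with initial covector $\lambda_0=(u_0,v_0,w_0)$. The unit energy shell is $E_1=\{\lambda_0:u_0^2+v_0^2+r_0^2w_0^2=1\}$. Exponential map and conjugate time: - $\mathrm{Exp}_{q_0}(\lambda_0)=\gamma(1;\lambda_0)$. - $t_{\mathrm{con}}(\gamma)=\inf\{t>0:\mathrm{Exp}_{q_0}\text{ has a critical point at }t\lambda_0\}$. *)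

(* Defs.v *)
From Stdlib Require Import Reals.
From Coquelicot Require Import Coquelicot.
Open Scope R_scope.

Definition R3 := (R * R * R)%type.

Definition normal_solution (q0 lam0 : R3)
  (x y z u v w : R -> R) : Prop :=
  let '(x0, y0, z0) := q0 in
  let '(u0, v0, w0) := lam0 in
  x 0 = x0 /\ y 0 = y0 /\ z 0 = z0 /\
  u 0 = u0 /\ v 0 = v0 /\ w 0 = w0 /\
  forall t : R,
    is_derive x t (u t) /\
    is_derive y t (v t) /\
    is_derive z t ((x t ^ 2 + y t ^ 2) * w t) /\
    is_derive u t (- (w t ^ 2) * x t) /\
    is_derive v t (- (w t ^ 2) * y t) /\
    is_derive w t 0.

Definition normal_flow (q0 : R3) (Gam : R3 -> R -> R3) : Prop :=
  forall lam0 : R3, exists u v w : R -> R,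
    normal_solution q0 lam0
      (fun t => fst (fst (Gam lam0 t)))
      (fun t => snd (fst (Gam lam0 t)))
      (fun t => snd (Gam lam0 t)) u v w.

Definition Exp (Gam : R3 -> R -> R3) (lam : R3) : R3 := Gam lam 1.

Definition critical_point (f : R3 -> R3) (p : R3) : Prop :=
  exists L : R3 -> R3,
    filterdiff f (locally p) L /\ ~ (forall y : R3, exists h : R3, L h = y).

Definition scal3 (t : R) (lam : R3) : R3 :=
  let '(a, b, c) := lam in (t * a, t * b, t * c).

(* t_con(gamma) = inf { t > 0 : Exp_{q0} has a critical point at t lam0 },
   as an extended real (+oo for the empty set). *)
Definition t_con (Gam : R3 -> R -> R3) (lam0 : R3) : Rbar :=
  Glb_Rbar (fun t => 0 < t /\ critical_point (Exp Gam) (scal3 t lam0)).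

(* Main.v *)
Require Import Defs.
From Stdlib Require Import Reals Lra Psatz FunctionalExtensionality.
From Coquelicot Require Import Coquelicot.
Open Scope R_scope.

Lemma const_deriv (g : R -> R) : (forall t, is_derive g t 0) -> forall t, g t = g 0.
Proof.
  intros H t. destruct (Rtotal_order t 0) as [Hl|[He|Hg]].
  - apply (eq_is_derive g t 0); [|lra]. intros; apply H.
  - now subst.
  - symmetry. apply (eq_is_derive g 0 t); [|lra]. intros; apply H.
Qed.

Definition Xf (w x0 u0 t : R) : R :=
  if Req_EM_T w 0 then x0 + u0 * t else x0 * cos (w * t) + u0 * (sin (w * t) / w).
Definition Uf (w x0 u0 t : R) : R :=
  if Req_EM_T w 0 then u0 else - x0 * w * sin (w * t) + u0 * cos (w * t).

Lemma Xf_der w x0 u0 t : is_derive (Xf w x0 u0) t (Uf w x0 u0 t).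
Proof.
  unfold Xf, Uf. destruct (Req_EM_T w 0).
  - auto_derive; auto; ring.
  - auto_derive; auto. field; auto.
Qed.

Lemma Uf_der w x0 u0 t : is_derive (Uf w x0 u0) t (- (w^2) * Xf w x0 u0 t).
Proof.
  unfold Xf, Uf. destruct (Req_EM_T w 0).
  - subst. auto_derive; auto; ring.
  - auto_derive; auto. field; auto.
Qed.

Lemma osc_unique (w x0 u0 : R) (x u : R -> R) :
  x 0 = x0 -> u 0 = u0 -> (forall t, is_derive x t (u t)) ->
  (forall t, is_derive u t (- (w^2) * x t)) -> forall t, x t = Xf w x0 u0 t.
Proof.
  intros H0 H1 Hx Hu.
  set (g := fun t => (u t - Uf w x0 u0 t)^2 + w^2 * (x t - Xf w x0 u0 t)^2).
  assert (Hg : forall t, g t = 0).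
  { intro t. assert (Dg : forall t, is_derive g t 0).
    2:{ rewrite (const_deriv g Dg t). unfold g.
    - unfold Xf, Uf. destruct (Req_EM_T w 0); rewrite H0, H1;
      rewrite ?Rmult_0_l, ?Rmult_0_r, ?sin_0, ?cos_0; simpl; unfold Rdiv; ring. }
    intro s. 
      evar (d : R). replace 0 with d.
      + apply (is_derive_plus (fun t => (u t - Uf w x0 u0 t)^2) (fun t => w^2 * (x t - Xf w x0 u0 t)^2)).
        * apply (is_derive_pow (fun t => u t - Uf w x0 u0 t)).
          apply (is_derive_minus u (Uf w x0 u0)); [apply Hu | apply Uf_der].
        * apply (is_derive_scal (fun t => (x t - Xf w x0 u0 t)^2)).
          apply (is_derive_pow (fun t => x t - Xf w x0 u0 t)).
          apply (is_derive_minus x (Xf w x0 u0)); [apply Hx | apply Xf_der].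
      + unfold d. simpl. unfold minus, plus, opp, scal; simpl. unfold mult; simpl. ring. }
  assert (HU : forall t, u t = Uf w x0 u0 t).
  { intro t. specialize (Hg t). unfold g in Hg.
    set (a := u t - Uf w x0 u0 t) in *. set (b := x t - Xf w x0 u0 t) in *.
    assert (0 <= w^2 * b^2) by (apply Rmult_le_pos; apply pow2_ge_0).
    assert (a^2 = 0) by (pose proof (pow2_ge_0 a); lra).
    assert (a * a = 0) by (simpl in H2; lra). apply Rmult_integral in H3. unfold a in H3; lra. }
  intro t.
  set (e := fun t => x t - Xf w x0 u0 t).
  assert (He : forall t, e t = 0).
  { intro s. assert (De : forall t, is_derive e t 0).
    2:{ rewrite (const_deriv e De s). unfold e.
    - unfold Xf. destruct (Req_EM_T w 0); rewrite H0; rewrite ?Rmult_0_r, ?Rmult_0_l, ?sin_0, ?cos_0; lra. }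
    intro r. replace 0 with (minus (u r) (Uf w x0 u0 r)).
      + apply (is_derive_minus x (Xf w x0 u0)); [apply Hx | apply Xf_der].
      + rewrite HU. unfold minus, plus, opp; simpl; ring. }
  specialize (He t). unfold e in He. lra.
Qed.

Definition Zf (x0 y0 z0 u v w t : R) : R :=
  if Req_EM_T w 0 then z0 else
  z0 + (x0^2+y0^2)*((w*t + sin(w*t)*cos(w*t))/2)
     + (u^2+v^2)*((w*t - sin(w*t)*cos(w*t))/(2*w^2))
     + (x0*u+y0*v)*(sin(w*t)^2/w).

Lemma Zf_der x0 y0 z0 u v w t :
  is_derive (Zf x0 y0 z0 u v w) t ((Xf w x0 u t ^ 2 + Xf w y0 v t ^ 2) * w).
Proof.
  unfold Zf, Xf. destruct (Req_EM_T w 0).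
  - subst. auto_derive; auto; ring.
  - auto_derive; auto.
    assert (Hc : cos (w*t) ^ 2 = 1 - sin (w*t) ^ 2) by (pose proof (sin2_cos2 (w*t)); unfold Rsqr in H; lra).
    field_simplify; auto. rewrite !Hc. field; auto.
Qed.

Definition EXf (x0 y0 z0 : R) (l : R3) : R3 :=
  let '(u, v, w) := l in (Xf w x0 u 1, Xf w y0 v 1, Zf x0 y0 z0 u v w 1).

Lemma Gam_eq x0 y0 z0 Gam : normal_flow (x0, y0, z0) Gam ->
  forall l, Gam l 1 = EXf x0 y0 z0 l.
Proof.
  intros HF [[u v] w]. destruct (HF ((u, v), w)) as (U & V & W & H).
  unfold normal_solution in H.
  destruct H as (Hx0 & Hy0 & Hz0 & Hu0 & Hv0 & Hw0 & HD).
  set (x := fun t => fst (fst (Gam (u, v, w) t))) in *.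
  set (y := fun t => snd (fst (Gam (u, v, w) t))) in *.
  set (z := fun t => snd (Gam (u, v, w) t)) in *.
  assert (HW : forall t, W t = w).
  { intro t. rewrite (const_deriv W (fun t => proj2 (proj2 (proj2 (proj2 (proj2 (HD t))))))). auto. }
  assert (HX : forall t, x t = Xf w x0 u t).
  { apply (osc_unique w x0 u x U); auto.
    - intro t; apply (HD t).
    - intro t. rewrite <- (HW t). apply (HD t). }
  assert (HY : forall t, y t = Xf w y0 v t).
  { apply (osc_unique w y0 v y V); auto.
    - intro t; apply (HD t).
    - intro t. rewrite <- (HW t). apply (HD t). }
  set (e := fun t => z t - Zf x0 y0 z0 u v w t).
  assert (De : forall t, is_derive e t 0).
  { intro t. replace 0 with (minus ((x t ^ 2 + y t ^ 2) * W t) ((Xf w x0 u t ^ 2 + Xf w y0 v t ^ 2) * w)).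
    - apply (is_derive_minus z (Zf x0 y0 z0 u v w)); [apply HD | apply Zf_der].
    - rewrite HX, HY, HW. unfold minus, plus, opp; simpl; ring. }
  assert (HZ : z 1 = Zf x0 y0 z0 u v w 1).
  { pose proof (const_deriv e De 1). unfold e in H.
    change (z 0 = z0) in Hz0. rewrite Hz0 in H. unfold Zf in H at 2. destruct (Req_EM_T w 0).
    - lra.
    - rewrite Rmult_0_r, sin_0, cos_0 in H. unfold Rdiv in H. lra. }
  simpl. rewrite <- HX, <- HY, <- HZ. unfold x, y, z. destruct (Gam (u, v, w) 1) as [[a b] c]. reflexivity.
Qed.

Ltac r3simp := repeat (progress (unfold plus, scal, prod_plus, prod_scal, mult; simpl)).

Lemma lin_expand (L : R3 -> R3) : is_linear L ->
  forall h1 h2 h3, L ((h1, h2), h3) =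
    plus (plus (scal h1 (L ((1,0),0))) (scal h2 (L ((0,1),0)))) (scal h3 (L ((0,0),1))).
Proof.
  intros HL h1 h2 h3.
  replace ((h1, h2), h3) with (plus (plus (scal h1 ((1,0),0) : R3) (scal h2 ((0,1),0))) (scal h3 ((0,0),1))).
  - rewrite !(linear_plus L HL), !(linear_scal L HL). reflexivity.
  - r3simp. f_equal; [f_equal|]; ring.
Qed.

Lemma L_apply (L : R3 -> R3) a11 a21 a31 a12 a22 a32 a13 a23 a33 :
  is_linear L ->
  L ((1,0),0) = ((a11,a21),a31) -> L ((0,1),0) = ((a12,a22),a32) ->
  L ((0,0),1) = ((a13,a23),a33) ->
  forall h1 h2 h3, L ((h1,h2),h3) =
    ((h1*a11 + h2*a12 + h3*a13, h1*a21 + h2*a22 + h3*a23), h1*a31 + h2*a32 + h3*a33).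
Proof.
  intros HL E1 E2 E3 h1 h2 h3. rewrite (lin_expand L HL), E1, E2, E3.
  r3simp. reflexivity.
Qed.

Lemma surj3 (L : R3 -> R3) a11 a21 a31 a12 a22 a32 a13 a23 a33 :
  is_linear L ->
  L ((1,0),0) = ((a11,a21),a31) -> L ((0,1),0) = ((a12,a22),a32) ->
  L ((0,0),1) = ((a13,a23),a33) ->
  a11*(a22*a33 - a23*a32) - a12*(a21*a33 - a23*a31) + a13*(a21*a32 - a22*a31) <> 0 ->
  forall y : R3, exists h, L h = y.
Proof.
  intros HL E1 E2 E3 Hd [[y1 y2] y3].
  set (d := a11*(a22*a33 - a23*a32) - a12*(a21*a33 - a23*a31) + a13*(a21*a32 - a22*a31)) in *.
  exists (( ((a22*a33 - a23*a32)*y1 - (a12*a33 - a13*a32)*y2 + (a12*a23 - a13*a22)*y3)/d,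
           (-(a21*a33 - a23*a31)*y1 + (a11*a33 - a13*a31)*y2 - (a11*a23 - a13*a21)*y3)/d),
           ((a21*a32 - a22*a31)*y1 - (a11*a32 - a12*a31)*y2 + (a11*a22 - a12*a21)*y3)/d).
  rewrite (L_apply L a11 a21 a31 a12 a22 a32 a13 a23 a33 HL E1 E2 E3).
  f_equal; [f_equal|]; unfold d in *; field; auto.
Qed.

Lemma notsurj3 (L : R3 -> R3) a31 a32 a13 a23 a33 :
  is_linear L ->
  L ((1,0),0) = ((0,0),a31) -> L ((0,1),0) = ((0,0),a32) ->
  L ((0,0),1) = ((a13,a23),a33) ->
  ~ (forall y : R3, exists h, L h = y).
Proof.
  intros HL E1 E2 E3 H.
  destruct (Req_dec a13 0) as [Z1|Z1]; [destruct (Req_dec a23 0) as [Z2|Z2]|].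
  - destruct (H ((1,0),0)) as [[[h1 h2] h3] Hh].
    rewrite (L_apply L 0 0 a31 0 0 a32 a13 a23 a33 HL E1 E2 E3) in Hh.
    inversion Hh. subst. lra.
  - destruct (H ((-a23,a13),0)) as [[[h1 h2] h3] Hh].
    rewrite (L_apply L 0 0 a31 0 0 a32 a13 a23 a33 HL E1 E2 E3) in Hh.
    inversion Hh. nra.
  - destruct (H ((-a23,a13),0)) as [[[h1 h2] h3] Hh].
    rewrite (L_apply L 0 0 a31 0 0 a32 a13 a23 a33 HL E1 E2 E3) in Hh.
    inversion Hh. nra.
Qed.

Lemma partial (f : R3 -> R3) (p e : R3) (L : R3 -> R3) :
  filterdiff f (locally p) L ->
  is_derive (fun t : R => f (plus p (scal t e))) 0 (L e).
Proof.
  intros Hf. unfold is_derive.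
  assert (Hg : filterdiff (fun t : R => plus p (scal t e)) (locally 0) (fun t => scal t e)).
  { assert (H1 := is_derive_scal_l (fun t : R => t) 0 one e (is_derive_id 0)).
    assert (H2 := is_derive_plus (fun _ : R => p) (fun t : R => scal t e) 0 zero _ (is_derive_const p 0) H1).
    unfold is_derive in H2.
    eapply filterdiff_ext_lin. apply H2.
    intro y; simpl. rewrite plus_zero_l, scal_one. reflexivity. }
  assert (Hp : plus p (scal 0 e) = p) by (destruct p as [[p1 p2] p3], e as [[e1 e2] e3]; r3simp; f_equal; [f_equal|]; ring).
  rewrite <- Hp in Hf at 1.
  pose proof (filterdiff_comp' _ _ 0 _ _ Hg Hf) as Hc.
  apply filterdiff_ext_lin with (1 := Hc).
  intro y. destruct Hf as [HL _]. apply (linear_scal L HL).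
Qed.

Lemma comp_fst {V W : NormedModule R_AbsRing} (f : R -> V * W) x (l : V * W) :
  is_derive f x l -> is_derive (fun t => fst (f t)) x (fst l).
Proof.
  intros H. unfold is_derive in *.
  apply (filterdiff_comp' f fst x _ fst H). apply filterdiff_linear. apply is_linear_fst.
Qed.

Lemma comp_snd {V W : NormedModule R_AbsRing} (f : R -> V * W) x (l : V * W) :
  is_derive f x l -> is_derive (fun t => snd (f t)) x (snd l).
Proof.
  intros H. unfold is_derive in *.
  apply (filterdiff_comp' f snd x _ snd H). apply filterdiff_linear. apply is_linear_snd.
Qed.

Lemma g1_pos (w : R) : 0 < w < PI -> 0 < sin w - w * cos w.
Proof.
  intros Hw.
  destruct (MVT_cor2 (fun x => sin x - x * cos x) (fun x => x * sin x) 0 w) as (c & Hc & Hc2).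
  - lra.
  - intros c _. apply is_derive_Reals. auto_derive; auto. ring.
  - rewrite sin_0, cos_0 in Hc.
    assert (0 < sin c) by (apply sin_gt_0; lra).
    assert (0 < c * sin c * (w - 0)) by (apply Rmult_lt_0_compat; [apply Rmult_lt_0_compat|]; lra).
    lra.
Qed.

Lemma h_pos (w : R) : 0 < w < PI -> 0 < sin w * (4 - w^2) - 4 * w * cos w.
Proof.
  intros Hw.
  destruct (MVT_cor2 (fun x => sin x * (4 - x^2) - 4 * x * cos x)
     (fun x => x * (sin x + (sin x - x * cos x))) 0 w) as (c & Hc & Hc2).
  - lra.
  - intros c _. apply is_derive_Reals. auto_derive; auto. ring.
  - rewrite sin_0, cos_0 in Hc.
    assert (0 < sin c) by (apply sin_gt_0; lra).
    assert (0 < sin c - c * cos c) by (apply g1_pos; lra).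
    assert (0 < c * (sin c + (sin c - c * cos c)) * (w - 0)) by (apply Rmult_lt_0_compat; [apply Rmult_lt_0_compat|]; lra).
    lra.
Qed.

Lemma sq0 x : x^2 = 0 -> x = 0.
Proof. intros H. assert (x*x = 0) by (simpl in H; lra). apply Rmult_integral in H0. lra. Qed.

Definition Dfun (x0 y0 u v w : R) :=
  (sin w / w) * (x0^2+y0^2 + (x0*u+y0*v)) + (u^2+v^2)*((sin w - w*cos w)/w^3).

Lemma Dpos_pos x0 y0 u v w : 0 < w < PI -> x0^2+y0^2 <> 0 -> 0 < Dfun x0 y0 u v w.
Proof.
  intros Hw Hr. unfold Dfun.
  assert (Hs : 0 < sin w) by (apply sin_gt_0; lra).
  pose proof (g1_pos w Hw). pose proof (h_pos w Hw).
  set (S := sin w / w). set (al := (sin w - w * cos w) / w ^ 3).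
  assert (HS : 0 < S) by (unfold S; apply Rdiv_lt_0_compat; lra).
  assert (Hal : 0 < 4 * al - S).
  { replace (4 * al - S) with ((sin w * (4 - w^2) - 4 * w * cos w) / w^3).
    - apply Rdiv_lt_0_compat; [lra|]. apply pow_lt; lra.
    - unfold al, S. field. lra. }
  assert (E : S * (x0 ^ 2 + y0 ^ 2 + (x0 * u + y0 * v)) + (u ^ 2 + v ^ 2) * al =
     S * ((x0 + u/2)^2 + (y0 + v/2)^2) + (u^2+v^2) * (4*al - S) / 4) by (field).
  rewrite E.
  assert (0 <= S * ((x0 + u/2)^2 + (y0 + v/2)^2)) by (apply Rmult_le_pos; [lra|]; pose proof (pow2_ge_0 (x0+u/2)); pose proof (pow2_ge_0 (y0+v/2)); lra).
  destruct (Req_dec (u^2+v^2) 0) as [P0|P0].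
  - assert (u = 0) by (apply sq0; pose proof (pow2_ge_0 u); pose proof (pow2_ge_0 v); lra).
    assert (v = 0) by (apply sq0; pose proof (pow2_ge_0 u); pose proof (pow2_ge_0 v); lra). subst.
    assert (0 < x0^2+y0^2) by (pose proof (pow2_ge_0 x0); pose proof (pow2_ge_0 y0); lra).
    replace ((x0 + 0/2)^2 + (y0 + 0/2)^2) with (x0^2+y0^2) by field.
    rewrite P0. assert (0 < S * (x0^2+y0^2)) by (apply Rmult_lt_0_compat; lra). lra.
  - assert (0 < u^2+v^2) by (pose proof (pow2_ge_0 u); pose proof (pow2_ge_0 v); lra).
    assert (0 < (u ^ 2 + v ^ 2) * (4 * al - S)) by (apply Rmult_lt_0_compat; lra).
    lra.
Qed.

Lemma Dpos x0 y0 u v w : 0 < Rabs w < PI -> x0^2+y0^2 <> 0 -> 0 < Dfun x0 y0 u v w.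
Proof.
  intros Hw Hr. destruct (Rle_or_lt 0 w).
  - rewrite Rabs_pos_eq in Hw by lra. apply Dpos_pos; lra.
  - rewrite Rabs_left in Hw by lra.
    replace (Dfun x0 y0 u v w) with (Dfun x0 y0 u v (-w)).
    + apply Dpos_pos; lra.
    + unfold Dfun. rewrite sin_neg, cos_neg. field. lra.
Qed.

Arguments Xf : simpl never.
Arguments Zf : simpl never.

Lemma deriv_col (F : R -> R3) d1 d2 d3 l :
  is_derive F 0 l -> is_derive (fun t => fst (fst (F t))) 0 d1 ->
  is_derive (fun t => snd (fst (F t))) 0 d2 -> is_derive (fun t => snd (F t)) 0 d3 ->
  l = ((d1, d2), d3).
Proof.
  intros H H1 H2 H3.
  pose proof (comp_fst _ _ _ (comp_fst _ _ _ H)) as G1.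
  pose proof (comp_snd _ _ _ (comp_fst _ _ _ H)) as G2.
  pose proof (comp_snd _ _ _ H) as G3.
  apply is_derive_unique in H1, H2, H3, G1, G2, G3.
  destruct l as [[l1 l2] l3]. simpl in *. congruence.
Qed.

Lemma locally_nz c : c <> 0 -> locally 0 (fun t : R => c + t <> 0).
Proof.
  intros Hc. exists (mkposreal (Rabs c) (Rabs_pos_lt c Hc)). intros t Ht.
  change (Rabs (t - 0) < Rabs c) in Ht. rewrite Rminus_0_r in Ht.
  intro E. replace t with (-c) in Ht by lra. rewrite Rabs_Ropp in Ht. lra.
Qed.

Lemma line1 a b c t : plus ((a,b),c) (scal t ((1,0),0)) = (((a+t),b),c) :> R3.
Proof. r3simp. f_equal; [f_equal|]; ring. Qed.
Lemma line2 a b c t : plus ((a,b),c) (scal t ((0,1),0)) = ((a,b+t),c) :> R3.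
Proof. r3simp. f_equal; [f_equal|]; ring. Qed.
Lemma line3 a b c t : plus ((a,b),c) (scal t ((0,0),1)) = ((a,b),c+t) :> R3.
Proof. r3simp. f_equal; [f_equal|]; ring. Qed.

Definition Xe w x0 u := x0 * cos w + u * (sin w / w).
Definition Ze x0 y0 z0 u v w :=
  z0 + (x0^2+y0^2)*((w + sin w * cos w)/2)
     + (u^2+v^2)*((w - sin w * cos w)/(2*w^2))
     + (x0*u+y0*v)*(sin w ^2/w).

Lemma Xf_Xe w x0 u : w <> 0 -> Xf w x0 u 1 = Xe w x0 u.
Proof. intros H. unfold Xf, Xe. destruct (Req_EM_T w 0); [congruence|]. rewrite Rmult_1_r. reflexivity. Qed.
Lemma Zf_Ze x0 y0 z0 u v w : w <> 0 -> Zf x0 y0 z0 u v w 1 = Ze x0 y0 z0 u v w.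
Proof. intros H. unfold Zf, Ze. destruct (Req_EM_T w 0); [congruence|]. rewrite Rmult_1_r. reflexivity. Qed.

Ltac nzt := repeat split; auto; repeat apply Rmult_integral_contrapositive_currified; auto; lra.

Section Jac.
Variables (x0 y0 z0 a b c : R).
Hypothesis Hc : c <> 0.
Variable L : R3 -> R3.
Hypothesis HL : filterdiff (EXf x0 y0 z0) (locally ((a,b),c)) L.

Lemma Le1 : L ((1,0),0) = ((sin c / c, 0),
   2*a*((c - sin c * cos c)/(2*c^2)) + x0*(sin c ^ 2 / c)).
Proof.
  pose proof (partial _ _ ((1,0),0) _ HL) as H.
  eapply is_derive_ext in H; [|intro t; rewrite line1; reflexivity].
  apply (deriv_col _ _ _ _ _ H); simpl.
  - apply (is_derive_ext (fun t => Xe c x0 (a+t))); [intro t; symmetry; apply Xf_Xe; auto|].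
    unfold Xe. auto_derive; auto; ring.
  - apply (is_derive_ext (fun t => Xe c y0 b)); [intro t; symmetry; apply Xf_Xe; auto|].
    unfold Xe. auto_derive; auto; ring.
  - apply (is_derive_ext (fun t => Ze x0 y0 z0 (a+t) b c)); [intro t; symmetry; apply Zf_Ze; auto|].
    unfold Ze. auto_derive; auto. field; auto.
Qed.

Lemma Le2 : L ((0,1),0) = ((0, sin c / c),
   2*b*((c - sin c * cos c)/(2*c^2)) + y0*(sin c ^ 2 / c)).
Proof.
  pose proof (partial _ _ ((0,1),0) _ HL) as H.
  eapply is_derive_ext in H; [|intro t; rewrite line2; reflexivity].
  apply (deriv_col _ _ _ _ _ H); simpl.
  - apply (is_derive_ext (fun t => Xe c x0 a)); [intro t; symmetry; apply Xf_Xe; auto|].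
    unfold Xe. auto_derive; auto; ring.
  - apply (is_derive_ext (fun t => Xe c y0 (b+t))); [intro t; symmetry; apply Xf_Xe; auto|].
    unfold Xe. auto_derive; auto; ring.
  - apply (is_derive_ext (fun t => Ze x0 y0 z0 a (b+t) c)); [intro t; symmetry; apply Zf_Ze; auto|].
    unfold Ze. auto_derive; auto. field; auto.
Qed.

Lemma Le3 : L ((0,0),1) = ((- x0 * sin c + a * ((c * cos c - sin c)/c^2),
                           - y0 * sin c + b * ((c * cos c - sin c)/c^2)),
   (x0^2+y0^2) * ((1 + cos c * cos c - sin c * sin c)/2)
   + (a^2+b^2) * ((1 - cos c * cos c + sin c * sin c)/(2*c^2) - (c - sin c * cos c)/c^3)
   + (x0*a+y0*b) * (2 * sin c * cos c / c - sin c ^ 2 / c^2)).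
Proof.
  pose proof (partial _ _ ((0,0),1) _ HL) as H.
  eapply is_derive_ext in H; [|intro t; rewrite line3; reflexivity].
  apply (deriv_col _ _ _ _ _ H); simpl.
  - apply (is_derive_ext_loc (fun t => Xe (c+t) x0 a)).
    { apply filter_imp with (2 := locally_nz c Hc). intros t Ht. symmetry; apply Xf_Xe; auto. }
    unfold Xe. auto_derive; rewrite ?Rplus_0_r; [nzt | field; auto].
  - apply (is_derive_ext_loc (fun t => Xe (c+t) y0 b)).
    { apply filter_imp with (2 := locally_nz c Hc). intros t Ht. symmetry; apply Xf_Xe; auto. }
    unfold Xe. auto_derive; rewrite ?Rplus_0_r; [nzt | field; auto].
  - apply (is_derive_ext_loc (fun t => Ze x0 y0 z0 a b (c+t))).
    { apply filter_imp with (2 := locally_nz c Hc). intros t Ht. symmetry; apply Zf_Ze; auto. }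
    unfold Ze. auto_derive; rewrite ?Rplus_0_r; [nzt | field; auto].
Qed.
End Jac.

Lemma det_id x0 y0 a b c : c <> 0 ->
  let s := sin c in let k := cos c in
  let a11 := s / c in let a21 := 0 in
  let a31 := 2*a*((c - s * k)/(2*c^2)) + x0*(s ^ 2 / c) in
  let a12 := 0 in let a22 := s / c in
  let a32 := 2*b*((c - s * k)/(2*c^2)) + y0*(s ^ 2 / c) in
  let a13 := - x0 * s + a * ((c * k - s)/c^2) in
  let a23 := - y0 * s + b * ((c * k - s)/c^2) in
  let a33 := (x0^2+y0^2) * ((1 + k * k - s * s)/2)
   + (a^2+b^2) * ((1 - k * k + s * s)/(2*c^2) - (c - s * k)/c^3)
   + (x0*a+y0*b) * (2 * s * k / c - s ^ 2 / c^2) in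
  a11*(a22*a33 - a23*a32) - a12*(a21*a33 - a23*a31) + a13*(a21*a32 - a22*a31)
  = (s / c) * Dfun x0 y0 a b c.
Proof.
  intros Hc s k. intros. unfold Dfun. fold s k.
  assert (Hk : k * k = 1 - s * s) by (pose proof (sin2_cos2 c); unfold Rsqr in H; fold s k in H; lra).
  unfold a11, a21, a31, a12, a22, a32, a13, a23, a33.
  replace (1 + k * k - s * s) with (2 - 2 * s * s) by lra.
  replace (1 - k * k + s * s) with (2 * s * s) by lra.
  field_simplify; auto.
  replace (k^2) with (1 - s^2) by (simpl; lra). field; auto.
Qed.

Lemma sin_nz c : 0 < Rabs c < PI -> sin c <> 0.
Proof.
  intros H. destruct (Rle_or_lt 0 c).
  - rewrite Rabs_pos_eq in H by lra. pose proof (sin_gt_0 c). lra.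
  - rewrite Rabs_left in H by lra. pose proof (sin_gt_0 (-c)). rewrite sin_neg in H1. lra.
Qed.

Lemma noncrit x0 y0 z0 a b c : 0 < Rabs c < PI -> x0^2+y0^2 <> 0 ->
  ~ critical_point (EXf x0 y0 z0) ((a,b),c).
Proof.
  intros Hc Hr [L [HL Hns]]. apply Hns.
  assert (c0 : c <> 0) by (intro E; subst; rewrite Rabs_R0 in Hc; lra).
  apply (surj3 L _ _ _ _ _ _ _ _ _ (proj1 HL) (Le1 x0 y0 z0 a b c c0 L HL)
     (Le2 x0 y0 z0 a b c c0 L HL) (Le3 x0 y0 z0 a b c c0 L HL)).
  pose proof (det_id x0 y0 a b c c0) as E. cbv zeta in E. rewrite E.
  apply Rmult_integral_contrapositive_currified.
  - unfold Rdiv. apply Rmult_integral_contrapositive_currified; [apply sin_nz; auto | apply Rinv_neq_0_compat; auto].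
  - pose proof (Dpos x0 y0 a b c Hc Hr). lra.
Qed.

Lemma crit_of_diff x0 y0 z0 a b c : (c = PI \/ c = -PI) ->
  (exists L, filterdiff (EXf x0 y0 z0) (locally ((a,b),c)) L) ->
  critical_point (EXf x0 y0 z0) ((a,b),c).
Proof.
  intros Hc [L HL]. exists L. split; auto.
  assert (c0 : c <> 0) by (pose proof PI_RGT_0; lra).
  assert (s0 : sin c = 0) by (destruct Hc; subst; [apply sin_PI | rewrite sin_neg, sin_PI; ring]).
  pose proof (Le1 x0 y0 z0 a b c c0 L HL) as E1.
  pose proof (Le2 x0 y0 z0 a b c c0 L HL) as E2.
  pose proof (Le3 x0 y0 z0 a b c c0 L HL) as E3.
  rewrite s0 in E1, E2. unfold Rdiv in E1, E2. rewrite Rmult_0_l in E1, E2.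
  exact (notsurj3 L _ _ _ _ _ (proj1 HL) E1 E2 E3).
Qed.

Section Diff.
Variable p : R3.

Definition Dif (f : R3 -> R) := exists l : R3 -> R, filterdiff f (locally p) l.

Lemma Dif_ext f g : (forall y, f y = g y) -> Dif f -> Dif g.
Proof. intros E [l H]. exists l. apply (filterdiff_ext f g l E H). Qed.

Lemma Dif_u : Dif (fun l => fst (fst l)).
Proof. exists (fun l : R3 => fst (fst l)). apply filterdiff_linear.
  apply (is_linear_comp (fun l : R3 => fst l) fst); apply is_linear_fst. Qed.
Lemma Dif_v : Dif (fun l => snd (fst l)).
Proof. exists (fun l : R3 => snd (fst l)). apply filterdiff_linear.
  apply (is_linear_comp (fun l : R3 => fst l) snd); [apply is_linear_fst | apply is_linear_snd]. Qed.
Lemma Dif_w : Dif (fun l => snd l).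
Proof. exists (fun l : R3 => snd l). apply filterdiff_linear. apply is_linear_snd. Qed.
Lemma Dif_c (k : R) : Dif (fun _ => k).
Proof. eexists. apply filterdiff_const. Qed.
Lemma Dif_plus f g : Dif f -> Dif g -> Dif (fun l => f l + g l).
Proof. intros [lf Hf] [lg Hg]. eexists. apply (filterdiff_plus_fct f g _ _ Hf Hg). Qed.
Lemma Dif_mult f g : Dif f -> Dif g -> Dif (fun l => f l * g l).
Proof. intros [lf Hf] [lg Hg]. eexists. apply (filterdiff_mult_fct f g p _ _ Rmult_comm Hf Hg). Qed.
Lemma Dif_comp (phi : R -> R) f : Dif f -> ex_derive phi (f p) -> Dif (fun l => phi (f l)).
Proof. intros [lf Hf] [d Hd]. eexists. apply (filterdiff_comp' f phi p _ _ Hf Hd). Qed.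

Lemma Dif_pair3 f g h : Dif f -> Dif g -> Dif h ->
  exists L, filterdiff (fun l => ((f l, g l), h l) : R3) (locally p) L.
Proof.
  intros [lf Hf] [lg Hg] [lh Hh].
  assert (P1 : forall {V W : NormedModule R_AbsRing} (f1 : R3 -> V) (f2 : R3 -> W) l1 l2,
     filterdiff f1 (locally p) l1 -> filterdiff f2 (locally p) l2 ->
     filterdiff (fun l => (f1 l, f2 l)) (locally p) (fun l => (l1 l, l2 l))).
  { intros V W f1 f2 l1 l2 H1 H2.
    apply (filterdiff_comp'_2 f1 f2 (fun a b => (a, b)) p l1 l2 (fun a b => (a, b)) H1 H2).
    apply filterdiff_linear. apply is_linear_ext with (fun t => t).
    - intros [x y]; reflexivity.
    - apply is_linear_id. }
  eexists. apply P1; [apply P1|]; eauto.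
Qed.
End Diff.

Arguments Xf : simpl never.
Arguments Zf : simpl never.

Ltac dift1 := match goal with
  | |- Dif _ (fun l => @?f l + @?g l) => apply (Dif_plus _ f g)
  | |- Dif _ (fun l => @?f l * @?g l) => apply (Dif_mult _ f g)
  | |- Dif _ (fun l => fst (fst l)) => apply Dif_u
  | |- Dif _ (fun l => snd (fst l)) => apply Dif_v
  | |- Dif _ (fun l => snd l) => apply Dif_w
  | |- Dif _ (fun _ => ?k) => apply (Dif_c _ k)
  end.
Ltac dift := repeat dift1.

Lemma exdiff x0 y0 z0 a b c : c <> 0 ->
  exists L, filterdiff (EXf x0 y0 z0) (locally ((a,b),c)) L.
Proof.
  intros Hc.
  set (p := ((a,b),c) : R3).
  assert (DA : forall phi : R -> R, ex_derive phi c -> Dif p (fun l => phi (snd l))).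
  { intros phi Hd. apply (Dif_comp p phi (fun l => snd l)); [apply Dif_w | exact Hd]. }
  destruct (Dif_pair3 p (fun l => Xe (snd l) x0 (fst (fst l))) (fun l => Xe (snd l) y0 (snd (fst l)))
     (fun l => Ze x0 y0 z0 (fst (fst l)) (snd (fst l)) (snd l))) as [L HL].
  - unfold Xe. dift.
    + apply (DA cos). auto_derive; auto.
    + apply (DA (fun t => sin t / t)). auto_derive; auto.
  - unfold Xe. dift.
    + apply (DA cos). auto_derive; auto.
    + apply (DA (fun t => sin t / t)). auto_derive; auto.
  - unfold Ze. dift.
    + apply (DA (fun t => (t + sin t * cos t) / 2)). auto_derive; auto.
    + apply (Dif_comp p (fun t => t^2) (fun l => fst (fst l))); [apply Dif_u | auto_derive; auto].
    + apply (Dif_comp p (fun t => t^2) (fun l => snd (fst l))); [apply Dif_v | auto_derive; auto].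
    + apply (DA (fun t => (t - sin t * cos t) / (2 * t^2))). auto_derive; repeat split; auto;
      repeat apply Rmult_integral_contrapositive_currified; auto; lra.
    + apply (DA (fun t => sin t ^ 2 / t)). auto_derive; auto.
  - exists L. refine (filterdiff_ext_locally _ (EXf x0 y0 z0) p L _ HL).
    exists (mkposreal (Rabs c) (Rabs_pos_lt c Hc)).
    intros [[u v] w] [_ Hw]. change (Rabs (w - c) < Rabs c) in Hw.
    assert (w <> 0) by (intro E; subst; rewrite Rminus_0_l, Rabs_Ropp in Hw; lra).
    simpl. rewrite !Xf_Xe, Zf_Ze by auto. reflexivity.
Qed.

Lemma mono0 (f f' : R -> R) x : 0 <= x ->
  (forall c, is_derive f c (f' c)) -> (forall c, 0 < c -> 0 <= f' c) -> f 0 <= f x.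
Proof.
  intros Hx Hd Hp. destruct (Req_dec x 0) as [E|E]; [subst; lra|].
  destruct (MVT_cor2 f f' 0 x) as (c & Hc & Hc2); [lra| intros c _; apply is_derive_Reals, Hd|].
  assert (0 <= f' c * (x - 0)) by (apply Rmult_le_pos; [apply Hp; lra | lra]). lra.
Qed.

Ltac monot f f' x Hx :=
  let H := fresh in
  assert (H := mono0 f f' x Hx ltac:(intro; auto_derive; auto; field) ltac:(intros; cbv beta; auto));
  simpl in H; rewrite ?sin_0, ?cos_0 in H.

Lemma t2 x : 0 <= x -> sin x <= x.
Proof. intros Hx.
  assert (forall c, 0 < c -> 0 <= 1 - cos c) by (intros c _; pose proof (COS_bound c); lra).
  monot (fun x => x - sin x) (fun x => 1 - cos x) x Hx. lra. Qed.

Lemma t3 x : 0 <= x -> 1 - x^2/2 <= cos x.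
Proof. intros Hx.
  assert (forall c, 0 < c -> 0 <= - sin c + c) by (intros c Hc; pose proof (t2 c); lra).
  monot (fun x => cos x - 1 + x^2/2) (fun x => - sin x + x) x Hx. lra. Qed.

Lemma t4 x : 0 <= x -> x - x^3/6 <= sin x.
Proof. intros Hx.
  assert (forall c, 0 < c -> 0 <= cos c - 1 + c^2/2) by (intros c Hc; pose proof (t3 c); lra).
  monot (fun x => sin x - x + x^3/6) (fun x => cos x - 1 + x^2/2) x Hx. lra. Qed.

Lemma t5 x : 0 <= x -> cos x <= 1 - x^2/2 + x^4/24.
Proof. intros Hx.
  assert (forall c, 0 < c -> 0 <= - c + c^3/6 + sin c) by (intros c Hc; pose proof (t4 c); lra).
  monot (fun x => 1 - x^2/2 + x^4/24 - cos x) (fun x => - x + x^3/6 + sin x) x Hx. lra. Qed.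

Lemma t6 x : 0 <= x -> sin x <= x - x^3/6 + x^5/120.
Proof. intros Hx.
  assert (forall c, 0 < c -> 0 <= 1 - c^2/2 + c^4/24 - cos c) by (intros c Hc; pose proof (t5 c); lra).
  monot (fun x => x - x^3/6 + x^5/120 - sin x) (fun x => 1 - x^2/2 + x^4/24 - cos x) x Hx. lra. Qed.

Lemma SB1 x : Rabs (sin x - x) <= Rabs x ^ 3 / 6.
Proof.
  destruct (Rle_or_lt 0 x).
  - rewrite (Rabs_pos_eq x) by lra. pose proof (t2 x H). pose proof (t4 x H).
    rewrite Rabs_left1 by lra. lra.
  - rewrite (Rabs_left x) by lra. pose proof (t2 (-x)). pose proof (t4 (-x)).
    rewrite sin_neg in *. rewrite Rabs_pos_eq.
    + replace ((-x)^3) with (-(x^3)) in * by ring. lra.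
    + lra.
Qed.

Lemma SB2 x : Rabs (x - sin x - x^3/6) <= Rabs x ^ 5 / 120.
Proof.
  destruct (Rle_or_lt 0 x).
  - rewrite (Rabs_pos_eq x) by lra. pose proof (t6 x H). pose proof (t4 x H).
    rewrite Rabs_left1 by lra. lra.
  - rewrite (Rabs_left x) by lra. pose proof (t6 (-x)). pose proof (t4 (-x)).
    rewrite sin_neg in *. rewrite Rabs_pos_eq.
    + replace ((-x)^3) with (-(x^3)) in * by ring. replace ((-x)^5) with (-(x^5)) in * by ring. lra.
    + replace ((-x)^3) with (-(x^3)) in * by ring. replace ((-x)^5) with (-(x^5)) in * by ring. lra.
Qed.

Lemma absdiv n d B : d <> 0 -> Rabs n <= B * Rabs d -> Rabs (n / d) <= B.
Proof.
  intros Hd H. unfold Rdiv. rewrite Rabs_mult, Rabs_inv.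
  assert (0 < Rabs d) by (apply Rabs_pos_lt; auto).
  apply Rmult_le_reg_r with (Rabs d); auto. rewrite Rmult_assoc, Rinv_l by lra. lra.
Qed.

Section Lim.
Variables (h : R).
Hypothesis Hh : h <> 0.
Hypothesis Hh1 : Rabs h <= 1.

Lemma T1b : Rabs ((sin (2*h) - 2*h) / (4*h)) <= h^2/3.
Proof.
  apply absdiv; [lra|]. pose proof (SB1 (2*h)).
  rewrite !Rabs_mult, (Rabs_pos_eq 2), (Rabs_pos_eq 4) in * by lra.
  rewrite <- (pow2_abs h). set (H' := Rabs h) in *. lra.
Qed.

Lemma T2b : Rabs (((2*h) - sin (2*h) - (2*h)^3/6) / (4*h^3)) <= h^2/15.
Proof.
  apply absdiv; [apply Rmult_integral_contrapositive_currified; [lra| apply pow_nonzero; auto]|].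
  pose proof (SB2 (2*h)).
  rewrite !Rabs_mult in *. rewrite ?RPow_abs in *. rewrite (Rabs_pos_eq 2), (Rabs_pos_eq 4) in * by lra.
  replace (Rabs (h^3)) with (Rabs h ^ 3) by (simpl; rewrite !Rabs_mult, Rabs_R1; ring).
  rewrite <- (pow2_abs h). set (H1 := Rabs h) in *. lra.
Qed.

Lemma T3b : Rabs ((sin h - h) * (sin h + h) / h^2) <= h^2/2.
Proof.
  apply absdiv; [apply pow_nonzero; auto|].
  pose proof (SB1 h). rewrite Rabs_mult.
  assert (0 <= Rabs h) by apply Rabs_pos.
  assert (Rabs (sin h + h) <= 3 * Rabs h).
  { replace (sin h + h) with ((sin h - h) + 2 * h) by ring.
    eapply Rle_trans; [apply Rabs_triang|]. rewrite Rabs_mult, (Rabs_pos_eq 2) by lra.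
    assert (Rabs h ^ 3 <= Rabs h).
    { replace (Rabs h ^ 3) with (Rabs h * (Rabs h * Rabs h)) by ring.
      assert (Rabs h * Rabs h <= 1) by nra. nra. }
    lra. }
  rewrite <- (pow2_abs h). rewrite (Rabs_pos_eq (Rabs h ^ 2)) by (apply pow2_ge_0).
  set (H' := Rabs h) in *.
  assert (0 <= Rabs (sin h - h)) by apply Rabs_pos.
  assert (0 <= Rabs (sin h + h)) by apply Rabs_pos.
  apply Rle_trans with ((H'^3/6) * (3 * H')).
  - apply Rmult_le_compat; auto.
  - right; field.
Qed.
End Lim.

Lemma lim0 x0 y0 z0 a b :
  is_derive (fun t => Zf x0 y0 z0 a b t 1) 0
    ((x0^2+y0^2) + (x0*a+y0*b) + (a^2+b^2)/3).
Proof.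
  apply is_derive_Reals. intros eps Heps.
  set (rho := x0^2+y0^2). set (P := a^2+b^2). set (Q := x0*a+y0*b).
  assert (Hr : 0 <= rho) by (unfold rho; pose proof (pow2_ge_0 x0); pose proof (pow2_ge_0 y0); lra).
  assert (HP : 0 <= P) by (unfold P; pose proof (pow2_ge_0 a); pose proof (pow2_ge_0 b); lra).
  set (M := rho + P + Rabs Q + 1).
  assert (HM : 0 < M) by (unfold M; pose proof (Rabs_pos Q); lra).
  assert (Hd : 0 < Rmin 1 (eps / M)) by (apply Rmin_glb_lt; [lra | apply Rdiv_lt_0_compat; lra]).
  exists (mkposreal _ Hd). intros h Hh Hhd. simpl in Hhd.
  assert (Hh1 : Rabs h <= 1) by (pose proof (Rmin_l 1 (eps/M)); lra).
  assert (Hh2 : Rabs h < eps / M) by (pose proof (Rmin_r 1 (eps/M)); lra).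
  rewrite Rplus_0_l.
  rewrite Zf_Ze by auto.
  unfold Zf. destruct (Req_EM_T 0 0) as [_|]; [|congruence].
  assert (E : (Ze x0 y0 z0 a b h - z0) / h - (rho + Q + P / 3) =
     rho * ((sin (2*h) - 2*h) / (4*h)) + P * (((2*h) - sin (2*h) - (2*h)^3/6) / (4*h^3))
     + Q * ((sin h - h) * (sin h + h) / h^2)).
  { unfold Ze. rewrite sin_2a. fold rho P Q. field. auto. }
  rewrite E.
  pose proof (T1b h Hh). pose proof (T2b h Hh). pose proof (T3b h Hh Hh1).
  eapply Rle_lt_trans; [apply Rabs_triang|].
  eapply Rle_lt_trans; [apply Rplus_le_compat_r; apply Rabs_triang|].
  rewrite !Rabs_mult, (Rabs_pos_eq rho), (Rabs_pos_eq P) by auto.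
  assert (0 <= h^2) by apply pow2_ge_0.
  assert (h^2 <= Rabs h) by (rewrite <- (pow2_abs h); pose proof (Rabs_pos h); nra).
  assert (Rabs h * M < eps) by (apply (Rmult_lt_compat_r M) in Hh2; auto; unfold Rdiv in Hh2; rewrite Rmult_assoc, Rinv_l in Hh2; lra).
  pose proof (Rabs_pos Q).
  apply Rle_lt_trans with (rho * (h^2/3) + P * (h^2/15) + Rabs Q * (h^2/2)).
  - apply Rplus_le_compat; [apply Rplus_le_compat|]; apply Rmult_le_compat_l; auto.
  - unfold M in *. nra.
Qed.

Arguments Xf : simpl never.
Arguments Zf : simpl never.

Lemma noncrit0 x0 y0 z0 a b : x0^2+y0^2 <> 0 -> ~ critical_point (EXf x0 y0 z0) ((a,b),0).
Proof.
  intros Hr [L [HL Hns]]. apply Hns.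
  assert (X0 : forall x u, Xf 0 x u 1 = x + u) by (intros; unfold Xf; destruct (Req_EM_T 0 0); [ring | congruence]).
  assert (Z0 : forall u v, Zf x0 y0 z0 u v 0 1 = z0) by (intros; unfold Zf; destruct (Req_EM_T 0 0); [auto | congruence]).
  assert (E1 : L ((1,0),0) = ((1,0),0)).
  { pose proof (partial _ _ ((1,0),0) _ HL) as H.
    eapply is_derive_ext in H; [|intro t; rewrite line1; reflexivity].
    apply (deriv_col _ _ _ _ _ H); simpl.
    - apply (is_derive_ext (fun t => x0 + (a + t))); [intro t; symmetry; apply X0|]. auto_derive; auto.
    - apply (is_derive_ext (fun t => y0 + b)); [intro t; symmetry; apply X0|]. auto_derive; auto.
    - apply (is_derive_ext (fun t => z0)); [intro t; symmetry; apply Z0|]. auto_derive; auto. }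
  assert (E2 : L ((0,1),0) = ((0,1),0)).
  { pose proof (partial _ _ ((0,1),0) _ HL) as H.
    eapply is_derive_ext in H; [|intro t; rewrite line2; reflexivity].
    apply (deriv_col _ _ _ _ _ H); simpl.
    - apply (is_derive_ext (fun t => x0 + a)); [intro t; symmetry; apply X0|]. auto_derive; auto.
    - apply (is_derive_ext (fun t => y0 + (b + t))); [intro t; symmetry; apply X0|]. auto_derive; auto.
    - apply (is_derive_ext (fun t => z0)); [intro t; symmetry; apply Z0|]. auto_derive; auto. }
  set (K := (x0^2+y0^2) + (x0*a+y0*b) + (a^2+b^2)/3).
  assert (E3 : snd (L ((0,0),1)) = K).
  { pose proof (partial _ _ ((0,0),1) _ HL) as H.
    eapply is_derive_ext in H; [|intro t; rewrite line3; reflexivity].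
    apply comp_snd in H. simpl in H.
    apply is_derive_unique in H. rewrite <- H.
    apply is_derive_unique.
    apply (is_derive_ext (fun t => Zf x0 y0 z0 a b t 1)); [intro t; rewrite Rplus_0_l; reflexivity|].
    apply lim0. }
  destruct (L ((0,0),1)) as [[a13 a23] a33] eqn:EL. simpl in E3. subst a33.
  apply (surj3 L _ _ _ _ _ _ _ _ _ (proj1 HL) E1 E2 EL).
  assert (0 < K).
  { unfold K.
    replace (x0 ^ 2 + y0 ^ 2 + (x0 * a + y0 * b) + (a ^ 2 + b ^ 2) / 3) with
      ((x0 + a/2)^2 + (y0 + b/2)^2 + (a^2+b^2)/12) by field.
    pose proof (pow2_ge_0 (x0+a/2)). pose proof (pow2_ge_0 (y0+b/2)).
    pose proof (pow2_ge_0 a). pose proof (pow2_ge_0 b).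
    destruct (Req_dec (a^2+b^2) 0) as [P0|P0].
    - assert (a = 0) by (apply sq0; lra). assert (b = 0) by (apply sq0; lra). subst.
      pose proof (pow2_ge_0 x0). pose proof (pow2_ge_0 y0).
      replace ((x0 + 0/2)^2 + (y0 + 0/2)^2) with (x0^2+y0^2) by field. lra.
    - lra. }
  intro D. apply (Rlt_irrefl 0). rewrite <- D at 2. ring_simplify. lra.
Qed.

Theorem theorem13 (x0 y0 z0 u0 v0 w0 : R) (Gam : R3 -> R -> R3) :
  x0 ^ 2 + y0 ^ 2 <> 0 ->
  u0 ^ 2 + v0 ^ 2 + (x0 ^ 2 + y0 ^ 2) * w0 ^ 2 = 1 ->
  normal_flow (x0, y0, z0) Gam ->
  (w0 = 0 -> t_con Gam (u0, v0, w0) = p_infty) /\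
  (w0 <> 0 -> t_con Gam (u0, v0, w0) = Finite (PI / Rabs w0)).
Proof.
  intros Hr _ HF.
  assert (HE : Exp Gam = EXf x0 y0 z0).
  { apply functional_extensionality. intro l. unfold Exp. apply Gam_eq; auto. }
  unfold t_con. rewrite HE. simpl scal3. split.
  - intros W0. subst w0. apply is_glb_Rbar_unique. split.
    + intros t [Ht Hc]. exfalso. rewrite Rmult_0_r in Hc. exact (noncrit0 x0 y0 z0 _ _ Hr Hc).
    + intros b _. destruct b; simpl; auto.
  - intros W0. assert (Hw : 0 < Rabs w0) by (apply Rabs_pos_lt; auto).
    assert (Hm : 0 < PI / Rabs w0) by (apply Rdiv_lt_0_compat; [apply PI_RGT_0 | auto]).
    assert (Hmem : 0 < PI / Rabs w0 /\ critical_point (EXf x0 y0 z0)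
        ((PI / Rabs w0 * u0, PI / Rabs w0 * v0), PI / Rabs w0 * w0)).
    { split; auto. apply crit_of_diff.
      - destruct (Rle_or_lt 0 w0).
        + left. rewrite Rabs_pos_eq by lra. field. lra.
        + right. rewrite Rabs_left by lra. field. lra.
      - apply exdiff. apply Rmult_integral_contrapositive_currified; lra. }
    apply is_glb_Rbar_unique. split.
    + intros t [Ht Hc]. simpl. destruct (Rle_or_lt (PI / Rabs w0) t) as [Hle|Hlt]; auto.
      exfalso. apply (noncrit x0 y0 z0 (t*u0) (t*v0) (t*w0)); auto.
      rewrite Rabs_mult, (Rabs_pos_eq t) by lra. split.
      * apply Rmult_lt_0_compat; lra.
      * apply (Rmult_lt_compat_r (Rabs w0)) in Hlt; auto.
        unfold Rdiv in Hlt. rewrite Rmult_assoc, Rinv_l in Hlt by lra. lra.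
    + intros b Hb. apply Hb. exact Hmem.
Qed.
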